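(* Let $A,B\subseteq \mathbb{R}^2$ be finite two-dimensional subsets (i.e., neither is contained in a line) with $0\in A\cap B$. Let $m$ and $n$ be the exact number of vertical lines which cover $A$ and $B$ respectively. Suppose $$|A+B|=\left(\frac{|A|}{m}+\frac{|B|}{n}-1\right)(m+n-1).$$ Then there exists a linear transformation $\varphi:\mathbb{R}^2\to\mathbb{R}^2$ of the form $\varphi(x,y)=(\alpha^{-1}x,\beta^{-1}y)$ for some positive reals $\alpha,\beta$, such that $\varphi(A)$ and $\varphi(B)$ are standard trapezoids $T(m,h,c,d)$ and $T(n,h',c,d)$ respectively, with common slopes $c$ and $d$ (for some integers $h,h'\ge 1$).
   Context: $A+B=\{a+b: a\in A, b\in B\}$ and $|X|$ denotes cardinality. Standard trapezoid: let $m\ge 1$, $h\ge 1$ be integers and $c,d\in\mathbb{R}$ with $c-d\in\mathbb{Z}$ and $h-1+(m-1)c\ge (m-1)d$. A standard trapezoid $T(m,h,c,d)$ is any translate of the finite set $T$ consisting of the points $(x,y)$ of the lattice $\{a(0,1)+b(1,d): a,b\in\mathbb{Z}\}$ satisfying $0\le x\le m-1$, $y\le cx+h-1$ and $y\ge dx$. *)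

(* Defs.v *)
From HB Require Import structures.
From mathcomp Require Import all_boot all_order all_algebra.
From mathcomp Require Import finmap.
From mathcomp Require Import reals.
Set Implicit Arguments. Unset Strict Implicit. Unset Printing Implicit Defensive.
Import Order.TTheory GRing.Theory Num.Theory.
Local Open Scope ring_scope.


Section Defs.
Variable R : realType.

Definition sumset (A B : {fset R * R}) : {fset R * R} :=
  [fset ((a.1 + b.1)%R, (a.2 + b.2)%R) | a : R * R in A, b : R * R in B]%fset.

Definition in_a_line (A : {fset R * R}) : Prop :=
  exists a b c : R, (a != 0 \/ b != 0) /\
    forall p, p \in A -> a * p.1 + b * p.2 = c.

(* number of vertical lines needed to cover A = number of distinct x-coordinates *)
Definition nvert (A : {fset R * R}) : nat := #|` [fset p.1 | p in A]%fset |%fset.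

(* the untranslated set T: points of the lattice {a(0,1) + b(1,d)} with
   0 <= x <= m-1, y <= c x + h - 1, y >= d x *)
Definition in_T (m h : nat) (c d : R) (p : R * R) : Prop :=
  (exists a b : int, p = (b%:~R, a%:~R + b%:~R * d)) /\
  0 <= p.1 /\ p.1 <= m%:R - 1 /\
  p.2 <= c * p.1 + h%:R - 1 /\ d * p.1 <= p.2.

Definition std_trapezoid (S : R * R -> Prop) (m h : nat) (c d : R) : Prop :=
  (1 <= m)%N /\ (1 <= h)%N /\ (exists z : int, c - d = z%:~R) /\
  (m%:R - 1) * d <= h%:R - 1 + (m%:R - 1) * c /\
  exists t : R * R, forall p, S p <-> in_T m h c d (p.1 - t.1, p.2 - t.2).

Definition scaled_image (alpha beta : R) (A : {fset R * R}) : R * R -> Prop :=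
  fun q => exists2 p, p \in A & q = (alpha^-1 * p.1, beta^-1 * p.2).

End Defs.

(* Main.v *)
Require Import Defs.
From HB Require Import structures.
From mathcomp Require Import all_boot all_order all_algebra.
From mathcomp Require Import finmap.
From mathcomp Require Import reals.
From mathcomp Require Import ring lra zify.
Set Implicit Arguments. Unset Strict Implicit. Unset Printing Implicit Defensive.
Import Order.TTheory GRing.Theory Num.Theory.
Local Open Scope fset_scope.
Local Open Scope ring_scope.



Section P1.
Variable R : realType.

Definition fmax (X : {fset R}) : R := foldr Num.max (head 0 (enum_fset X)) (enum_fset X).
Definition fmin (X : {fset R}) : R := foldr Num.min (head 0 (enum_fset X)) (enum_fset X).

Lemma foldr_max_prop (x0 : R) (s : seq R) :
  foldr Num.max x0 s \in x0 :: s /\ x0 <= foldr Num.max x0 s /\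
  forall y, y \in s -> y <= foldr Num.max x0 s.
Proof.
elim: s => [|a s [IH1 [IH2 IH3]]] /=; first by rewrite mem_seq1 eqxx.
split; last split.
- case: (leP a (foldr Num.max x0 s)) => H.
  + idtac. move: IH1; rewrite !inE => /orP [->//|->]; by rewrite !orbT.
  + idtac. by rewrite !inE eqxx orbT.
- by rewrite le_max IH2 orbT.
- move=> y; rewrite inE => /orP [/eqP ->|/IH3 Hy]; first by rewrite le_max lexx.
  by rewrite le_max Hy orbT.
Qed.

Lemma foldr_min_prop (x0 : R) (s : seq R) :
  foldr Num.min x0 s \in x0 :: s /\ foldr Num.min x0 s <= x0 /\
  forall y, y \in s -> foldr Num.min x0 s <= y.
Proof.
elim: s => [|a s [IH1 [IH2 IH3]]] /=; first by rewrite mem_seq1 eqxx.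
split; last split.
- case: (leP a (foldr Num.min x0 s)) => H.
  + idtac. by rewrite !inE eqxx orbT.
  + idtac. move: IH1; rewrite !inE => /orP [->//|->]; by rewrite !orbT.
- by rewrite ge_min IH2 orbT.
- move=> y; rewrite inE => /orP [/eqP ->|/IH3 Hy]; first by rewrite ge_min lexx.
  by rewrite ge_min Hy orbT.
Qed.

Lemma fmax_mem X : X != fset0 -> fmax X \in X.
Proof.
rewrite /fmax => HX.
have [H1 _] := foldr_max_prop (head 0 (enum_fset X)) (enum_fset X).
move: H1; rewrite inE => /orP [/eqP ->|//].
case E: (enum_fset X) => [|a s] /=.
  exfalso; move/negP: HX; apply; apply/eqP/fsetP => x.
  by rewrite in_fset0; apply/negbTE; rewrite -[_ \in _]/(x \in enum_fset X) E.
by rewrite -[_ \in _]/(a \in enum_fset X) E mem_head.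
Qed.

Lemma fmax_ge X x : x \in X -> x <= fmax X.
Proof. move=> Hx; have [_ [_ H]] := foldr_max_prop (head 0 (enum_fset X)) (enum_fset X); exact: H. Qed.

Lemma fmin_mem X : X != fset0 -> fmin X \in X.
Proof.
rewrite /fmin => HX.
have [H1 _] := foldr_min_prop (head 0 (enum_fset X)) (enum_fset X).
move: H1; rewrite inE => /orP [/eqP ->|//].
case E: (enum_fset X) => [|a s] /=.
  exfalso; move/negP: HX; apply; apply/eqP/fsetP => x.
  by rewrite in_fset0; apply/negbTE; rewrite -[_ \in _]/(x \in enum_fset X) E.
by rewrite -[_ \in _]/(a \in enum_fset X) E mem_head.
Qed.

Lemma fmin_le X x : x \in X -> fmin X <= x.
Proof. move=> Hx; have [_ [_ H]] := foldr_min_prop (head 0 (enum_fset X)) (enum_fset X); exact: H. Qed.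

Lemma fmax_eq X x : x \in X -> (forall y, y \in X -> y <= x) -> fmax X = x.
Proof.
move=> Hx H; apply/le_anti/andP; split; last exact: fmax_ge.
apply: H; apply: fmax_mem.
by apply/eqP => E; rewrite E in_fset0 in Hx.
Qed.

Lemma fmin_eq X x : x \in X -> (forall y, y \in X -> x <= y) -> fmin X = x.
Proof.
move=> Hx H; apply/le_anti/andP; split; first exact: fmin_le.
apply: H; apply: fmin_mem.
by apply/eqP => E; rewrite E in_fset0 in Hx.
Qed.


Definition ssum (X Y : {fset R}) : {fset R} := [fset (x + y)%R | x in X, y in Y].

Lemma ssumP X Y z : reflect (exists2 x, x \in X & exists2 y, y \in Y & z = x + y) (z \in ssum X Y).
Proof. exact: imfset2P. Qed.

Lemma ssum_mem X Y x y : x \in X -> y \in Y -> x + y \in ssum X Y.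
Proof. by move=> Hx Hy; apply/ssumP; exists x => //; exists y. Qed.

Lemma fset_neq0 (T : choiceType) (X : {fset T}) x : x \in X -> X != fset0.
Proof. by move=> Hx; apply/eqP => E; rewrite E in_fset0 in Hx. Qed.

Lemma fmax_ssum X Y : X != fset0 -> Y != fset0 -> fmax (ssum X Y) = fmax X + fmax Y.
Proof.
move=> HX HY; apply: fmax_eq; first by apply: ssum_mem; apply: fmax_mem.
move=> z /ssumP [x Hx [y Hy ->]]; apply: lerD; exact: fmax_ge.
Qed.

Lemma fmin_ssum X Y : X != fset0 -> Y != fset0 -> fmin (ssum X Y) = fmin X + fmin Y.
Proof.
move=> HX HY; apply: fmin_eq; first by apply: ssum_mem; apply: fmin_mem.
move=> z /ssumP [x Hx [y Hy ->]]; apply: lerD; exact: fmin_le.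
Qed.

Lemma ssum_neq0 X Y : X != fset0 -> Y != fset0 -> ssum X Y != fset0.
Proof. move=> HX HY; apply: (@fset_neq0 _ _ (fmax X + fmax Y)); apply: ssum_mem; exact: fmax_mem. Qed.

Lemma card_ssum1 x Y : #|` ssum [fset x] Y| = #|` Y|.
Proof.
have -> : ssum [fset x] Y = [fset (x + y)%R | y in Y].
  apply/fsetP => z; apply/ssumP/imfsetP => [[x' Hx' [y Hy ->]]|[y Hy ->]].
    by move: Hx'; rewrite in_fset1 => /eqP ->; exists y.
  by exists x; rewrite ?in_fset1 //; exists y.
rewrite card_imfset //=; exact: addrI.
Qed.

Lemma fmax_lt X x : X != fset0 -> x \in X -> x != fmax X -> x < fmax X.
Proof. by move=> _ Hx Hne; rewrite lt_neqAle Hne fmax_ge. Qed.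

Lemma CD X Y : X != fset0 -> Y != fset0 -> (#|` X| + #|` Y| <= #|` ssum X Y| + 1)%N.
Proof.
move Hk: #|` X| => k; elim: k X Hk => [|k IH] X Hk HX HY.
  by move: HX; rewrite -cardfs_eq0 Hk.
set x := fmax X.
have Hx : x \in X by apply: fmax_mem.
case: (boolP (X `\ x == fset0)) => H0.
  have EX : X = [fset x].
    apply/fsetP => z; rewrite in_fset1; apply/idP/eqP => [Hz|->//].
    apply/eqP; apply: contraT => Hzx.
    by move/eqP/fsetP: H0 => /(_ z); rewrite in_fsetD1 Hzx Hz in_fset0.
  by move: Hk; rewrite EX card_ssum1 cardfs1 => -[<-]; rewrite addnC.
have Hk' : #|` X `\ x| = k by move: (cardfsD1 x X); rewrite Hx Hk add1n => -[].
have := IH _ Hk' H0 HY.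
set y := fmax Y.
have Hy : y \in Y by apply: fmax_mem.
have Hnot : x + y \notin ssum (X `\ x) Y.
  apply/negP => /ssumP [x' Hx' [y' Hy' E]].
  move: Hx'; rewrite in_fsetD1 => /andP [Hne Hx'].
  have : x' + y' < x + y by apply: ltr_leD; [apply: fmax_lt | apply: fmax_ge].
  by rewrite E ltxx.
have Hsub : (x + y) |` ssum (X `\ x) Y `<=` ssum X Y.
  apply/fsubsetP => z; rewrite in_fset1U => /orP [/eqP ->|/ssumP [x' Hx' [y' Hy' ->]]].
    exact: ssum_mem.
  by apply: ssum_mem => //; move: Hx'; rewrite in_fsetD1 => /andP [].
have := fsubset_leq_card Hsub; rewrite cardfsU1 Hnot add1n => H1 H2.
rewrite addSn; apply: (@leq_trans (#|` ssum (X `\ x) Y| + 1).+1); first by rewrite ltnS.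
by rewrite !addn1 ltnS.
Qed.

End P1.



Section P2.
Variable R : realType.
Implicit Types (A B : {fset R * R}) (X Y : {fset R}).

Definition xs A : {fset R} := [fset p.1 | p in A].
Definition colf A (x : R) : {fset R} := [fset p.2 | p in [fset q in A | q.1 == x]].
Definition cut A (t : R) := [fset q in A | q.1 < t].
Definition cutle A (t : R) := [fset q in A | q.1 <= t].

Lemma sumsetP A B z : reflect (exists2 a, a \in A & exists2 b, b \in B & z = (a.1 + b.1, a.2 + b.2))
  (z \in sumset A B).
Proof. exact: imfset2P. Qed.

Lemma sumset_mem A B a b : a \in A -> b \in B -> (a.1 + b.1, a.2 + b.2) \in sumset A B.
Proof. by move=> Ha Hb; apply/sumsetP; exists a => //; exists b. Qed.

Lemma sumsetC A B : sumset A B = sumset B A.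
Proof.
apply/fsetP => z; apply/sumsetP/sumsetP => [[a Ha [b Hb ->]]|[a Ha [b Hb ->]]];
  by exists b => //; exists a => //; rewrite addrC [a.2 + _]addrC.
Qed.

Lemma xsP A x : reflect (exists2 p, p \in A & x = p.1) (x \in xs A).
Proof. exact: imfsetP. Qed.

Lemma xs_mem A p : p \in A -> p.1 \in xs A.
Proof. by move=> Hp; apply/xsP; exists p. Qed.

Lemma colfP A x y : reflect ((x, y) \in A) (y \in colf A x).
Proof.
apply: (iffP idP) => [/imfsetP [q]|H].
  by rewrite inE /= => /andP [Hq /eqP <-] ->; rewrite -surjective_pairing.
by apply/imfsetP; exists (x, y) => //; rewrite !inE /= eqxx andbT.
Qed.

Lemma colf_neq0 A x : x \in xs A -> colf A x != fset0.
Proof. by move=> /xsP [p Hp ->]; apply: (@fset_neq0 _ _ p.2); apply/colfP; rewrite -surjective_pairing. Qed.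

Lemma xs_neq0 A : A != fset0 -> xs A != fset0.
Proof.
move=> /fset0Pn [p Hp].
exact: (fset_neq0 (xs_mem Hp)).
Qed.

Lemma xs_sumset A B : xs (sumset A B) = ssum (xs A) (xs B).
Proof.
apply/fsetP => x; apply/xsP/ssumP => [[p /sumsetP [a Ha [b Hb ->]] ->]|[u /xsP [a Ha ->] [v /xsP [b Hb ->] ->]]].
  by exists a.1; [exact: xs_mem|exists b.1 => //; exact: xs_mem].
by exists (a.1 + b.1, a.2 + b.2) => //; exact: sumset_mem.
Qed.

Lemma colf_sumset_sub A B x y : ssum (colf A x) (colf B y) `<=` colf (sumset A B) (x + y).
Proof.
apply/fsubsetP => z /ssumP [u /colfP Hu [v /colfP Hv ->]]; apply/colfP.
exact: (sumset_mem Hu Hv).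
Qed.

Lemma colf_sumset_max A B : A != fset0 -> B != fset0 ->
  colf (sumset A B) (fmax (xs A) + fmax (xs B)) = ssum (colf A (fmax (xs A))) (colf B (fmax (xs B))).
Proof.
move=> HA HB; apply/eqP; rewrite eqEfsubset colf_sumset_sub andbT.
apply/fsubsetP => z /colfP /sumsetP [a Ha [b Hb [E1 E2]]].
have Ha1 : a.1 <= fmax (xs A) by apply: fmax_ge; exact: xs_mem.
have Hb1 : b.1 <= fmax (xs B) by apply: fmax_ge; exact: xs_mem.
have Ea : a.1 = fmax (xs A) by lra.
have Eb : b.1 = fmax (xs B) by lra.
rewrite E2; apply: ssum_mem; apply/colfP; [rewrite -Ea | rewrite -Eb]; by rewrite -surjective_pairing.
Qed.

Lemma card_colf A x : #|` colf A x| = #|` [fset q in A | q.1 == x]|.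
Proof.
rewrite card_in_imfset //= => p q; rewrite !inE /= => /andP [_ /eqP Hp] /andP [_ /eqP Hq] E.
by rewrite [p]surjective_pairing [q]surjective_pairing Hp Hq E.
Qed.

Lemma card_cut A : #|` A| = (#|` cut A (fmax (xs A))| + #|` colf A (fmax (xs A))|)%N.
Proof.
rewrite card_colf -(cardfsID [fset q in A | q.1 < fmax (xs A)] A).
congr (_ + _)%N; congr (#|` _|); apply/fsetP => q; rewrite !inE /=.
  by case: (q \in A); rewrite ?andbF ?andbT.
case: (boolP (q \in A)) => Hq; rewrite ?andbF //= ?andbT.
have := fmax_ge (xs_mem Hq); rewrite le_eqVlt.
by case: eqP => [->|_] /=; rewrite ?ltxx // => ->.
Qed.

Lemma xs_cut A t : xs (cut A t) = [fset u in xs A | u < t].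
Proof.
apply/fsetP => u; rewrite inE /=; apply/xsP/andP => [[p]|[/xsP [p Hp ->] Hu]].
  by rewrite inE /= => /andP [Hp Ht] ->; split => //; exact: xs_mem.
by exists p => //; rewrite !inE /= Hu andbT.
Qed.

Lemma xs_cutle A t : xs (cutle A t) = [fset u in xs A | u <= t].
Proof.
apply/fsetP => u; rewrite inE /=; apply/xsP/andP => [[p]|[/xsP [p Hp ->] Hu]].
  by rewrite inE /= => /andP [Hp Ht] ->; split => //; exact: xs_mem.
by exists p => //; rewrite !inE /= Hu andbT.
Qed.

Lemma colf_cut A t x : x < t -> colf (cut A t) x = colf A x.
Proof.
move=> Hx; apply/fsetP => y; apply/colfP/colfP; rewrite inE /=; first by case/andP.
by move=> H; rewrite !inE /= Hx andbT.
Qed.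

Lemma colf_cutle A t x : x <= t -> colf (cutle A t) x = colf A x.
Proof.
move=> Hx; apply/fsetP => y; apply/colfP/colfP; rewrite inE /=; first by case/andP.
by move=> H; rewrite !inE /= Hx andbT.
Qed.

Lemma card_xs_cut A : A != fset0 -> #|` xs (cut A (fmax (xs A)))| = (#|` xs A| - 1)%N.
Proof.
move=> HA; rewrite xs_cut.
have Hm := fmax_mem (xs_neq0 HA).
rewrite (cardfsD1 (fmax (xs A)) (xs A)) Hm add1n subSS subn0.
congr (#|` _|); apply/fsetP => u; rewrite !inE /=.
case: (boolP (u \in xs A)) => Hu; rewrite ?andbF //= !andbT.
by rewrite lt_neqAle fmax_ge // andbT.
Qed.

Lemma cut_neq0 A : (1 < #|` xs A|)%N -> cut A (fmax (xs A)) != fset0.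
Proof.
move=> H; have HA : A != fset0.
  by apply/eqP => E; move: H; rewrite E /xs imfset0 cardfs0.
apply/eqP => E; have := card_xs_cut HA; rewrite E /xs imfset0 cardfs0.
move: H; rewrite -/(xs A); lia.
Qed.

End P2.



Section P3.
Variable R : realType.
Implicit Types (A B : {fset R * R}) (X Y : {fset R}).

Definition topc A B : {fset R * R} :=
  [fset (fmax (xs A) + fmax (xs B), z) | z in ssum (colf A (fmax (xs A))) (colf B (fmax (xs B)))].

Lemma ssumC X Y : ssum X Y = ssum Y X.
Proof.
apply/fsetP => z; apply/ssumP/ssumP => [[x Hx [y Hy ->]]|[x Hx [y Hy ->]]];
  by exists y => //; exists x => //; rewrite addrC.
Qed.

Lemma topcC A B : topc A B = topc B A.
Proof. by rewrite /topc addrC ssumC. Qed.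

Lemma card_topc A B : #|` topc A B| = #|` ssum (colf A (fmax (xs A))) (colf B (fmax (xs B)))|.
Proof. by rewrite card_imfset //= => u v []. Qed.

Lemma step_sub A B : A != fset0 -> B != fset0 ->
  sumset (cut A (fmax (xs A))) B `|` topc A B `<=` sumset A B.
Proof.
move=> HA HB; apply/fsubsetP => z; rewrite in_fsetU => /orP [/sumsetP [a Ha [b Hb ->]]|/imfsetP [w Hw ->]].
  by apply: sumset_mem => //; move: Ha; rewrite !inE => /andP [].
rewrite -colf_sumset_max // in Hw; by move/colfP: Hw.
Qed.

Lemma step_disj A B : A != fset0 -> B != fset0 ->
  sumset (cut A (fmax (xs A))) B `&` topc A B = fset0.
Proof.
move=> HA HB; apply/fsetP => z; rewrite in_fsetI in_fset0.
apply/negbTE/negP => /andP [/sumsetP [a Ha [b Hb ->]] /imfsetP [w Hw [E1 E2]]].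
move: Ha; rewrite !inE /= => /andP [Ha Hlt].
have Hb1 : b.1 <= fmax (xs B) by apply: fmax_ge; exact: xs_mem.
lra.
Qed.

Lemma step_card A B : A != fset0 -> B != fset0 ->
  (#|` sumset (cut A (fmax (xs A))) B| + #|` ssum (colf A (fmax (xs A))) (colf B (fmax (xs B)))|
    <= #|` sumset A B|)%N.
Proof.
move=> HA HB; have := fsubset_leq_card (step_sub HA HB).
by rewrite cardfsU step_disj // cardfs0 subn0 card_topc.
Qed.

Lemma step_eq A B : A != fset0 -> B != fset0 ->
  (#|` sumset (cut A (fmax (xs A))) B| + #|` ssum (colf A (fmax (xs A))) (colf B (fmax (xs B)))|
    = #|` sumset A B|)%N ->
  sumset A B = sumset (cut A (fmax (xs A))) B `|` topc A B.
Proof.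
move=> HA HB E; apply/esym/fsetP.
have E' : #|` sumset (cut A (fmax (xs A))) B `|` topc A B| = #|` sumset A B|.
  by rewrite cardfsU step_disj // cardfs0 subn0 card_topc.
exact: (fsubset_cardP E' (step_sub HA HB)).
Qed.


Definition mA A : R := (#|` xs A|)%:R.
Definition Tv A B : R := ((#|` A|)%:R / mA A + (#|` B|)%:R / mA B) * (mA A + mA B - 1).
Definition Def A B : R := (#|` sumset A B|)%:R + (mA A + mA B - 1) - Tv A B.
Definition ca A := #|` colf A (fmax (xs A))|.
Definition cc A B := #|` ssum (colf A (fmax (xs A))) (colf B (fmax (xs B)))|.
Definition Kf A B : R := ((#|` A|)%:R / mA A - (ca A)%:R) * (mA B - 1)
   - ((#|` B|)%:R / mA B - (ca B)%:R) * (mA A - 1).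

Lemma DefC A B : Def A B = Def B A.
Proof. by rewrite /Def /Tv sumsetC (addrC (mA A)) (addrC (_ / mA A)). Qed.

Lemma KfC A B : Kf B A = - Kf A B.
Proof. by rewrite /Kf opprB. Qed.

Lemma ccC A B : cc A B = cc B A.
Proof. by rewrite /cc ssumC. Qed.

Lemma mA_pos A : A != fset0 -> 0 < mA A.
Proof. by move=> HA; rewrite /mA ltr0n cardfs_gt0 xs_neq0. Qed.

Lemma mA_ge1 A : A != fset0 -> 1 <= mA A.
Proof. by move=> HA; rewrite /mA ler1n cardfs_gt0 xs_neq0. Qed.

Lemma keyA A B : A != fset0 -> B != fset0 -> (1 < #|` xs A|)%N ->
  Def A B = Kf A B / (mA A - 1)
    + ((#|` sumset A B|)%:R - (#|` sumset (cut A (fmax (xs A))) B|)%:R - (cc A B)%:R)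
    + ((cc A B)%:R + 1 - (ca A)%:R - (ca B)%:R)
    + Def (cut A (fmax (xs A))) B.
Proof.
move=> HA HB Hm.
have EA : (#|` A|)%:R = (#|` cut A (fmax (xs A))|)%:R + (ca A)%:R :> R.
  by rewrite {1}card_cut natrD.
have Em : mA (cut A (fmax (xs A))) = mA A - 1.
  by rewrite /mA card_xs_cut // natrB //; apply: ltnW.
have H1 : 1 < mA A by rewrite /mA ltr1n.
have H2 := mA_pos HB.
rewrite /Def /Tv /Kf Em EA; field.
by rewrite (gt_eqF H2) subr_eq0 (gt_eqF H1) (gt_eqF (lt_trans ltr01 H1)).
Qed.

Lemma m1_facts A : A != fset0 -> ~~ (1 < #|` xs A|)%N ->
  mA A = 1 /\ (#|` A|)%:R = (ca A)%:R :> R /\ cut A (fmax (xs A)) = fset0.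
Proof.
move=> HA Hm.
have H1 : #|` xs A| = 1%N.
  by move: (xs_neq0 HA); rewrite -cardfs_gt0; move: Hm; case: (#|` xs A|) => [|[|]].
have Hc : cut A (fmax (xs A)) = fset0.
  apply/eqP; apply: contraT => Hn; have := card_xs_cut HA; rewrite H1 /=.
  by move/eqP; rewrite cardfs_eq0 => /eqP E; move: (xs_neq0 Hn); rewrite E eqxx.
split; first by rewrite /mA H1.
split => //; by rewrite {1}card_cut Hc cardfs0.
Qed.

Lemma t1_ge0 A B : A != fset0 -> B != fset0 ->
  0 <= (#|` sumset A B|)%:R - (#|` sumset (cut A (fmax (xs A))) B|)%:R - (cc A B)%:R :> R.
Proof.
move=> HA HB; have := step_card HA HB; rewrite -(ler_nat R) natrD -/(cc A B) => H; lra.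
Qed.

Lemma t2_ge0 A B : A != fset0 -> B != fset0 ->
  0 <= (cc A B)%:R + 1 - (ca A)%:R - (ca B)%:R :> R.
Proof.
move=> HA HB; have := @CD R (colf A (fmax (xs A))) (colf B (fmax (xs B))).
rewrite !colf_neq0 ?fmax_mem ?xs_neq0 // => /(_ isT isT).
rewrite -(ler_nat R) !natrD -/(cc A B) /ca => H; lra.
Qed.

Lemma cc_le A B : A != fset0 -> B != fset0 -> (cc A B)%:R <= (#|` sumset A B|)%:R :> R.
Proof. move=> HA HB; have := t1_ge0 HA HB; have := ler0n R (#|` sumset (cut A (fmax (xs A))) B|); lra. Qed.

Lemma base_id A B : A != fset0 -> B != fset0 -> ~~ (1 < #|` xs A|)%N -> ~~ (1 < #|` xs B|)%N ->
  Def A B = ((#|` sumset A B|)%:R - (cc A B)%:R) + ((cc A B)%:R + 1 - (ca A)%:R - (ca B)%:R).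
Proof.
move=> HA HB HmA HmB; have [E1 [E2 _]] := m1_facts HA HmA; have [E3 [E4 _]] := m1_facts HB HmB.
rewrite /Def /Tv E1 E2 E3 E4 !divr1; lra.
Qed.

Lemma Kf_m1 A B : A != fset0 -> B != fset0 -> ~~ (1 < #|` xs B|)%N -> Kf A B = 0.
Proof.
move=> HA HB Hm; have [E1 [E2 _]] := m1_facts HB Hm.
by rewrite /Kf E1 E2 divr1 !subrr mulr0 mul0r subrr.
Qed.

Lemma Def_ge0_aux k A B : (#|` xs A| + #|` xs B| <= k)%N -> A != fset0 -> B != fset0 -> 0 <= Def A B.
Proof.
elim: k A B => [|k IH] A B Hk HA HB.
  by move: Hk; rewrite leqn0 addn_eq0 => /andP [/eqP E _]; move: (xs_neq0 HA); rewrite -cardfs_gt0 E.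
have stepA : forall A B, A != fset0 -> B != fset0 -> (1 < #|` xs A|)%N ->
    (#|` xs A| + #|` xs B| <= k.+1)%N -> 0 <= Kf A B -> 0 <= Def A B.
  move=> A1 B1 HA1 HB1 Hm Hk1 HK.
  rewrite keyA //.
  have H1 : 0 <= Kf A1 B1 / (mA A1 - 1).
    by apply: divr_ge0 => //; rewrite subr_ge0; apply: mA_ge1.
  have := t1_ge0 HA1 HB1; have := t2_ge0 HA1 HB1.
  have : 0 <= Def (cut A1 (fmax (xs A1))) B1.
    apply: IH; last by [].
      by rewrite card_xs_cut //; move: Hk1 Hm; lia.
    exact: cut_neq0.
  lra.
case: (boolP (1 < #|` xs A|)%N) => HmA; case: (boolP (1 < #|` xs B|)%N) => HmB.
- case: (lerP 0 (Kf A B)) => HK; first exact: stepA.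
  rewrite DefC; apply: stepA => //; first by rewrite addnC.
  by rewrite KfC; lra.
- by apply: stepA => //; rewrite Kf_m1.
- rewrite DefC; apply: stepA => //; first by rewrite addnC.
  by rewrite Kf_m1.
- rewrite base_id //; have := t2_ge0 HA HB; have := cc_le HA HB; lra.
Qed.

Lemma Def_ge0 A B : A != fset0 -> B != fset0 -> 0 <= Def A B.
Proof. exact: (@Def_ge0_aux (#|` xs A| + #|` xs B|)). Qed.

Lemma Kf_ge0 A B : A != fset0 -> B != fset0 -> Def A B = 0 -> 0 <= Kf A B.
Proof.
move=> HA HB H0; case: (boolP (1 < #|` xs B|)%N) => Hn; last by rewrite Kf_m1.
rewrite DefC keyA // in H0.
have := t1_ge0 HB HA; have := t2_ge0 HB HA.
have : 0 <= Def (cut B (fmax (xs B))) A by apply: Def_ge0 => //; exact: cut_neq0.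
have Hp : 0 < mA B - 1 by rewrite subr_gt0 /mA ltr1n.
have E : Kf B A = Kf B A / (mA B - 1) * (mA B - 1) by rewrite divfK // gt_eqF.
rewrite KfC in E H0 => h1 h2 h3.
have : Kf B A / (mA B - 1) <= 0 by rewrite KfC; lra.
rewrite KfC => h4. nra.
Qed.

Lemma descA A B : A != fset0 -> B != fset0 -> Def A B = 0 -> (1 < #|` xs A|)%N ->
  Def (cut A (fmax (xs A))) B = 0 /\
  (#|` sumset (cut A (fmax (xs A))) B| + cc A B = #|` sumset A B|)%N /\
  (cc A B + 1 = ca A + ca B)%N.
Proof.
move=> HA HB H0 Hm.
have HK := Kf_ge0 HA HB H0.
rewrite keyA // in H0.
have h1 := t1_ge0 HA HB; have h2 := t2_ge0 HA HB.
have h3 : 0 <= Def (cut A (fmax (xs A))) B by apply: Def_ge0 => //; exact: cut_neq0.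
have h4 : 0 <= Kf A B / (mA A - 1) by apply: divr_ge0 => //; rewrite subr_ge0; apply: mA_ge1.
split; first lra.
split; apply/eqP; rewrite -(eqr_nat R) ?natrD; apply/eqP; lra.
Qed.

Lemma R3 A B : A != fset0 -> B != fset0 -> Def A B = 0 -> (cc A B + 1 = ca A + ca B)%N.
Proof.
move=> HA HB H0; case: (boolP (1 < #|` xs A|)%N) => Hm; first by case: (descA HA HB H0 Hm) => _ [].
case: (boolP (1 < #|` xs B|)%N) => Hn.
  rewrite DefC in H0; case: (descA HB HA H0 Hn) => _ [_ E]; by rewrite ccC E addnC.
rewrite base_id // in H0; have := t2_ge0 HA HB; have := cc_le HA HB => h1 h2.
apply/eqP; rewrite -(eqr_nat R) ?natrD; apply/eqP; lra.
Qed.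

End P3.



Section P4.
Variable R : realType.
Implicit Types (A B : {fset R * R}) (X Y : {fset R}).

Lemma U_cancel (T : choiceType) (X Y Z : {fset T}) :
  X `|` Z = Y `|` Z -> X `&` Z = fset0 -> Y `&` Z = fset0 -> X = Y.
Proof.
move=> E DX DY; apply/fsetP => z.
case: (boolP (z \in Z)) => Hz.
  move/fsetP: DX => /(_ z); move/fsetP: DY => /(_ z).
  by rewrite !in_fsetI !in_fset0 Hz !andbT => -> ->.
by move/fsetP: E => /(_ z); rewrite !in_fsetU (negbTE Hz) !orbF.
Qed.

Lemma pred_lt A : A != fset0 -> cut A (fmax (xs A)) != fset0 ->
  fmax (xs (cut A (fmax (xs A)))) < fmax (xs A).
Proof.
move=> HA Hc; have := fmax_mem (xs_neq0 Hc); rewrite {2}xs_cut !inE /=.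
by case/andP.
Qed.

Lemma local A B : A != fset0 -> B != fset0 -> Def A B = 0 ->
  (1 < #|` xs A|)%N -> (1 < #|` xs B|)%N ->
  let x := fmax (xs A) in let y := fmax (xs B) in
  let x' := fmax (xs (cut A x)) in let y' := fmax (xs (cut B y)) in
  x' + y = x + y' /\ ssum (colf A x') (colf B y) = ssum (colf A x) (colf B y').
Proof.
move=> HA HB H0 Hm Hn x y x' y'.
have HA' := cut_neq0 Hm; have HB' := cut_neq0 Hn.
have [_ [E1 _]] := descA HA HB H0 Hm.
have H0' : Def B A = 0 by rewrite DefC.
have [_ [E2 _]] := descA HB HA H0' Hn.
have S1 := step_eq HA HB E1.
have S2 := step_eq HB HA E2.
rewrite sumsetC topcC in S2.
have D1 := step_disj HA HB.
have D2 := step_disj HB HA.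
rewrite topcC in D2.
rewrite (sumsetC (cut B _)) in S2 D2.
have EE : sumset (cut A x) B = sumset A (cut B y).
  apply: (U_cancel (Z := topc A B)) => //; by rewrite -S1 -S2.
have Ex : x' + y = x + y'.
  have := congr1 (fun S => fmax (xs S)) EE; rewrite /= !xs_sumset !fmax_ssum ?xs_neq0 //.
have Hx' : x' < x by apply: pred_lt.
have Hy' : y' < y by apply: pred_lt.
split => //.
have := congr1 (fun S => colf S (x' + y)) EE; rewrite /=.
rewrite {2}Ex !colf_sumset_max //.
by rewrite !colf_cut.
Qed.

Lemma cutle_max A : cutle A (fmax (xs A)) = A.
Proof.
apply/fsetP => q; rewrite !inE /=; case: (boolP (q \in A)) => Hq //=.
by rewrite fmax_ge // xs_mem.
Qed.

Lemma cutle_cut A x t : t < x -> cutle (cut A x) t = cutle A t.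
Proof.
move=> Ht; apply/fsetP => q; rewrite !inE /=; case: (q \in A) => //=.
case: (boolP (q.1 <= t)) => H; rewrite ?andbF ?andbT //.
exact: (le_lt_trans H Ht).
Qed.

Lemma mem_xs_cut A x t : t \in xs A -> t < x -> t \in xs (cut A x).
Proof. by move=> Ht Hlt; rewrite xs_cut !inE /= Ht Hlt. Qed.

Lemma m_gt1 A t : t \in xs A -> t != fmax (xs A) -> (1 < #|` xs A|)%N.
Proof.
move=> Ht Hne; have HA : A != fset0.
  by apply/eqP => E; move: Ht; rewrite E /xs imfset0 in_fset0.
have : cut A (fmax (xs A)) != fset0.
  apply/negP => /eqP E.
  have := mem_xs_cut Ht (fmax_lt (xs_neq0 HA) Ht Hne); rewrite E /xs imfset0 in_fset0 //.
move/xs_neq0; rewrite -cardfs_gt0 card_xs_cut //.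
by move: (xs_neq0 HA); rewrite -cardfs_gt0; lia.
Qed.

Lemma EqAll_aux k A B : (#|` xs A| + #|` xs B| <= k)%N -> A != fset0 -> B != fset0 -> Def A B = 0 ->
  forall t s, t \in xs A -> s \in xs B -> Def (cutle A t) (cutle B s) = 0.
Proof.
elim: k A B => [|k IH] A B Hk HA HB H0 t s Ht Hs.
  by move: Hk; rewrite leqn0 addn_eq0 => /andP [/eqP E _]; move: (xs_neq0 HA); rewrite -cardfs_gt0 E.
case: (eqVneq t (fmax (xs A))) => Htx.
  case: (eqVneq s (fmax (xs B))) => Hsy.
    by rewrite Htx Hsy !cutle_max.
  have Hn := m_gt1 Hs Hsy.
  have H0' : Def B A = 0 by rewrite DefC.
  have [H1 _] := descA HB HA H0' Hn.
  have Hlt := fmax_lt (xs_neq0 HB) Hs Hsy.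
  rewrite -(cutle_cut _ Hlt) DefC; apply: (IH _ A) => //.
  - by rewrite card_xs_cut //; move: Hk Hn; lia.
  - exact: cut_neq0.
  - exact: mem_xs_cut.
have Hm := m_gt1 Ht Htx.
have [H1 _] := descA HA HB H0 Hm.
have Hlt := fmax_lt (xs_neq0 HA) Ht Htx.
rewrite -(cutle_cut _ Hlt); apply: IH => //.
- by rewrite card_xs_cut //; move: Hk Hm; lia.
- exact: cut_neq0.
- exact: mem_xs_cut.
Qed.

Definition below A t := [fset u in xs A | u < t].

Lemma cutle_neq0 A t : t \in xs A -> cutle A t != fset0.
Proof.
move=> /xsP [p Hp ->]; apply: (@fset_neq0 _ _ p); by rewrite !inE /= Hp lexx.
Qed.

Lemma fmax_cutle A t : t \in xs A -> fmax (xs (cutle A t)) = t.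
Proof.
move=> Ht; apply: fmax_eq; first by rewrite xs_cutle !inE /= Ht lexx.
by move=> y; rewrite xs_cutle !inE /= => /andP [].
Qed.

Lemma xs_cut_cutle A t : xs (cut (cutle A t) t) = below A t.
Proof.
apply/fsetP => u; rewrite xs_cut xs_cutle !inE /=.
case: (u \in xs A) => //=; case: (boolP (u < t)) => H; rewrite ?andbF ?andbT //.
exact: ltW.
Qed.

Lemma R3all A B : A != fset0 -> B != fset0 -> Def A B = 0 -> forall t s, t \in xs A -> s \in xs B ->
  (#|` ssum (colf A t) (colf B s)| + 1 = #|` colf A t| + #|` colf B s|)%N.
Proof.
move=> HA HB H0 t s Ht Hs.
have := R3 (cutle_neq0 Ht) (cutle_neq0 Hs) (EqAll_aux (leqnn _) HA HB H0 Ht Hs).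
by rewrite /cc /ca !fmax_cutle // !colf_cutle.
Qed.

Lemma Lall A B : A != fset0 -> B != fset0 -> Def A B = 0 -> forall t s, t \in xs A -> s \in xs B ->
  below A t != fset0 -> below B s != fset0 ->
  fmax (below A t) + s = t + fmax (below B s) /\
  ssum (colf A (fmax (below A t))) (colf B s) = ssum (colf A t) (colf B (fmax (below B s))).
Proof.
move=> HA HB H0 t s Ht Hs HbA HbB.
have HmA : (1 < #|` xs (cutle A t)|)%N.
  apply: (@m_gt1 _ (fmax (below A t))).
    by have := fmax_mem HbA; rewrite xs_cutle !inE /= => /andP [-> /ltW ->].
  by rewrite fmax_cutle //; have := fmax_mem HbA; rewrite !inE /= => /andP [_ /lt_eqF ->].
have HmB : (1 < #|` xs (cutle B s)|)%N.
  apply: (@m_gt1 _ (fmax (below B s))).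
    by have := fmax_mem HbB; rewrite xs_cutle !inE /= => /andP [-> /ltW ->].
  by rewrite fmax_cutle //; have := fmax_mem HbB; rewrite !inE /= => /andP [_ /lt_eqF ->].
have := local (cutle_neq0 Ht) (cutle_neq0 Hs) (EqAll_aux (leqnn _) HA HB H0 Ht Hs) HmA HmB.
rewrite /= !fmax_cutle // !xs_cut_cutle.
have Ht' : fmax (below A t) <= t by have := fmax_mem HbA; rewrite !inE /= => /andP [_ /ltW].
have Hs' : fmax (below B s) <= s by have := fmax_mem HbB; rewrite !inE /= => /andP [_ /ltW].
by rewrite !colf_cutle.
Qed.

End P4.



Section P5.
Variable R : realType.
Implicit Types (A B : {fset R * R}) (X Y S : {fset R}).

Definition belowS S (t : R) := [fset u in S | u < t].

Definition isAP S (x0 b : R) (q : nat) := forall u, u \in S <-> exists2 j, (j < q)%N & u = x0 + j%:R * b.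

Lemma belowS_pred S u : u \in S -> belowS S u != fset0 ->
  belowS S u = fmax (belowS S u) |` belowS S (fmax (belowS S u)).
Proof.
move=> Hu Hb; set u' := fmax (belowS S u).
have Hu' : u' \in belowS S u by apply: fmax_mem.
apply/fsetP => v; rewrite in_fset1U !inE /=.
move: (Hu'); rewrite !inE /= => /andP [Hu'S Hu'u].
apply/andP/orP => [[Hv Hvu]|[/eqP ->|/andP [Hv Hvu']]].
- have : v <= u' by apply: fmax_ge; rewrite !inE /= Hv Hvu.
  by rewrite le_eqVlt => /orP [->|->]; [left | right; rewrite Hv].
- by [].
- by split => //; exact: (lt_trans Hvu').
Qed.

Lemma card_belowS_pred S u : u \in S -> belowS S u != fset0 ->
  #|` belowS S u| = (#|` belowS S (fmax (belowS S u))|).+1.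
Proof.
move=> Hu Hb; rewrite {1}(belowS_pred Hu Hb) cardfsU1.
by rewrite !inE /= ltxx andbF.
Qed.

Lemma belowS_card_lt S u : u \in S -> (#|` belowS S u| < #|` S|)%N.
Proof.
move=> Hu; apply: fproper_ltn_card; rewrite fproperE; apply/andP; split.
  by apply/fsubsetP => v; rewrite !inE /= => /andP [].
apply/negP => /fsubsetP /(_ u Hu); by rewrite !inE /= ltxx andbF.
Qed.

Lemma ap_of_gaps S d : S != fset0 ->
  (forall t, t \in S -> belowS S t != fset0 -> t - fmax (belowS S t) = d) ->
  isAP S (fmin S) d #|` S|.
Proof.
move=> HS Hg.
have C : forall n u, u \in S -> #|` belowS S u| = n -> u = fmin S + n%:R * d.
  elim=> [|n IH] u Hu Hn.
    rewrite mul0r addr0; apply/le_anti; rewrite fmin_le // andbT.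
    rewrite leNgt; apply/negP => Hlt.
    move/eqP: Hn; rewrite cardfs_eq0 => /eqP /fsetP /(_ (fmin S)).
    by rewrite !inE /= fmin_mem // Hlt.
  have Hb : belowS S u != fset0 by rewrite -cardfs_gt0 Hn.
  have Hu' : fmax (belowS S u) \in S.
    by have := fmax_mem Hb; rewrite !inE /= => /andP [].
  have Hc : #|` belowS S (fmax (belowS S u))| = n.
    by have := card_belowS_pred Hu Hb; rewrite Hn => -[].
  have E := IH _ Hu' Hc.
  have := Hg _ Hu Hb; rewrite E -natr1 => E2.
  have -> : u = u - (fmin S + n%:R * d) + (fmin S + n%:R * d) by rewrite subrK.
  rewrite E2; ring.
have Hmx : fmax S \in S by apply: fmax_mem.
have Cmax : #|` belowS S (fmax S)| = (#|` S| - 1)%N.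
  have -> : belowS S (fmax S) = S `\ fmax S.
    apply/fsetP => v; rewrite !inE /=; case: (boolP (v \in S)) => Hv; rewrite ?andbF ?andbT //.
    by rewrite lt_neqAle fmax_ge // andbT.
  by rewrite (cardfsD1 (fmax S) S) Hmx add1n subn1.
have D : forall j, (j < #|` S|)%N -> exists2 u, u \in S & #|` belowS S u| = (#|` S| - 1 - j)%N.
  elim=> [|j IH] Hj; first by exists (fmax S); rewrite // subn0.
  have [u Hu Hc] := IH (ltnW Hj).
  have Hb : belowS S u != fset0 by rewrite -cardfs_gt0 Hc; lia.
  exists (fmax (belowS S u)).
    by have := fmax_mem Hb; rewrite !inE /= => /andP [].
  by move: (card_belowS_pred Hu Hb); rewrite Hc; lia.
move=> u; split => [Hu|[j Hj ->]].
  by exists #|` belowS S u|; [exact: belowS_card_lt | exact: C].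
have [v Hv Hc] := D (#|` S| - 1 - j)%N ltac:(lia).
have Hc' : #|` belowS S v| = j by rewrite Hc; lia.
by rewrite -(C _ _ Hv Hc').
Qed.

Lemma belowS_fmax S : S != fset0 -> belowS S (fmax S) = S `\ fmax S.
Proof.
move=> HS; apply/fsetP => v; rewrite !inE /=; case: (boolP (v \in S)) => Hv; rewrite ?andbF ?andbT //.
by rewrite lt_neqAle fmax_ge // andbT.
Qed.

Lemma belowS_fmax_neq0 S : (1 < #|` S|)%N -> belowS S (fmax S) != fset0.
Proof.
move=> H; have HS : S != fset0 by rewrite -cardfs_gt0; lia.
rewrite belowS_fmax // -cardfs_gt0.
have := cardfsD1 (fmax S) S; rewrite fmax_mem //; lia.
Qed.

Lemma belowS_lt S t : belowS S t != fset0 -> fmax (belowS S t) < t.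
Proof. by move=> H; have := fmax_mem H; rewrite !inE /= => /andP []. Qed.

Lemma belowS_mem S t : belowS S t != fset0 -> fmax (belowS S t) \in S.
Proof. by move=> H; have := fmax_mem H; rewrite !inE /= => /andP []. Qed.

Definition emb X : {fset R * R} := [fset (x, 0) | x in X].

Lemma xs_emb X : xs (emb X) = X.
Proof.
apply/fsetP => x; apply/xsP/idP => [[p /imfsetP [y Hy ->] ->] //|Hx].
by exists (x, 0) => //; apply/imfsetP; exists x.
Qed.

Lemma card_emb X : #|` emb X| = #|` X|.
Proof. by rewrite card_imfset //= => u v []. Qed.

Lemma sumset_emb X Y : sumset (emb X) (emb Y) = emb (ssum X Y).
Proof.
apply/fsetP => z; apply/sumsetP/imfsetP => [[a /imfsetP [x Hx ->] [b /imfsetP [y Hy ->] ->]]|[w /ssumP [x Hx [y Hy ->]] ->]].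
  by exists (x + y); [exact: ssum_mem | rewrite /= addr0].
exists (x, 0); first by apply/imfsetP; exists x.
by exists (y, 0); [apply/imfsetP; exists y | rewrite /= addr0].
Qed.

Lemma emb_neq0 X : X != fset0 -> emb X != fset0.
Proof. by move=> H; rewrite -cardfs_gt0 card_emb cardfs_gt0. Qed.

Lemma ICD X Y : (1 < #|` X|)%N -> (1 < #|` Y|)%N -> (#|` ssum X Y| + 1 = #|` X| + #|` Y|)%N ->
  exists2 b, 0 < b & isAP X (fmin X) b #|` X| /\ isAP Y (fmin Y) b #|` Y|.
Proof.
move=> HX HY HE.
have HX0 : X != fset0 by rewrite -cardfs_gt0; lia.
have HY0 : Y != fset0 by rewrite -cardfs_gt0; lia.
have H0 : Def (emb X) (emb Y) = 0.
  rewrite /Def /Tv /mA !xs_emb !card_emb sumset_emb card_emb.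
  have Hx : (#|` X|)%:R != 0 :> R by rewrite pnatr_eq0 -lt0n; lia.
  have Hy : (#|` Y|)%:R != 0 :> R by rewrite pnatr_eq0 -lt0n; lia.
  rewrite !divff //.
  have : (#|` ssum X Y|)%:R + 1 = (#|` X|)%:R + (#|` Y|)%:R :> R by rewrite -natrD -HE natrD.
  lra.
have L := Lall (emb_neq0 HX0) (emb_neq0 HY0) H0.
rewrite /below !xs_emb in L.
have bX := belowS_fmax_neq0 HX.
have bY := belowS_fmax_neq0 HY.
set b := fmax Y - fmax (belowS Y (fmax Y)).
have Hb : 0 < b by rewrite /b subr_gt0; apply: belowS_lt.
have gX : forall t, t \in X -> belowS X t != fset0 -> t - fmax (belowS X t) = b.
  move=> t Ht Hbt; have [E _] := L t (fmax Y) Ht (fmax_mem HY0) Hbt bY.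
  rewrite /b; lra.
exists b => //; split; apply: ap_of_gaps => //.
move=> s Hs Hbs; have [E _] := L (fmax X) s (fmax_mem HX0) Hs bX Hbs.
have := gX _ (fmax_mem HX0) bX; lra.
Qed.

End P5.



Section P6.
Variable R : realType.
Implicit Types (A B : {fset R * R}) (X Y S : {fset R}).

Lemma isAP_mem S x0 b q j : isAP S x0 b q -> (j < q)%N -> x0 + j%:R * b \in S.
Proof. by move=> H Hj; apply/H; exists j. Qed.

Lemma isAP_fmin S x0 b q : isAP S x0 b q -> 0 < b -> (0 < q)%N -> fmin S = x0.
Proof.
move=> H Hb Hq; apply: fmin_eq.
  by have := isAP_mem H Hq; rewrite mul0r addr0.
move=> y /H [j _ ->]; rewrite lerDl; apply: mulr_ge0 => //; exact: ltW.
Qed.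

Lemma isAP_fmax S x0 b q : isAP S x0 b q -> 0 < b -> (0 < q)%N -> fmax S = x0 + (q.-1)%:R * b.
Proof.
move=> H Hb Hq; apply: fmax_eq; first by apply: (isAP_mem H); lia.
move=> y /H [j Hj ->]; rewrite lerD2l ler_wpM2r ?ler_nat //; [exact: ltW | lia].
Qed.

Lemma isAP1 S b : #|` S| = 1%N -> isAP S (fmin S) b 1.
Proof.
move=> H1; have HS : S != fset0 by rewrite -cardfs_gt0 H1.
move/eqP: H1 => /cardfs1P [x Ex] u; rewrite Ex in_fset1.
have -> : fmin [fset x] = x by apply: fmin_eq; rewrite ?in_fset1 // => y; rewrite in_fset1 => /eqP ->.
split => [/eqP ->|[j Hj ->]]; first by exists 0%N => //; rewrite mul0r addr0.
rewrite (_ : j = 0%N); last lia. by rewrite mul0r addr0.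
Qed.

Lemma isAP_step S x0 b x1 b' q : isAP S x0 b q -> isAP S x1 b' q -> 0 < b -> 0 < b' ->
  (1 < q)%N -> b = b'.
Proof.
move=> H1 H2 Hb Hb' Hq.
have E1 := isAP_fmin H1 Hb (ltnW Hq); have E2 := isAP_fmin H2 Hb' (ltnW Hq).
have F1 := isAP_fmax H1 Hb (ltnW Hq); have F2 := isAP_fmax H2 Hb' (ltnW Hq).
have Hq1 : 0 < (q.-1)%:R :> R by rewrite ltr0n; lia.
have : (q.-1)%:R * b = (q.-1)%:R * b' by move: F2; rewrite F1 -E1 E2 => /addrI.
by move/mulfI; apply; rewrite gt_eqF.
Qed.

Lemma isAP_pred S x0 b q k : isAP S x0 b q -> 0 < b -> (0 < k < q)%N ->
  belowS S (x0 + k%:R * b) != fset0 /\ fmax (belowS S (x0 + k%:R * b)) = x0 + (k.-1)%:R * b.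
Proof.
move=> H Hb Hk.
have Hm : x0 + (k.-1)%:R * b \in belowS S (x0 + k%:R * b).
  rewrite !inE /= (isAP_mem H) ?ltrD2l ?ltr_pM2r ?ltr_nat //=; lia.
split; first exact: fset_neq0 Hm.
apply: fmax_eq => // y; rewrite !inE /= => /andP [/H [j Hj ->] Hlt].
rewrite lerD2l ler_wpM2r ?ler_nat; [|exact: ltW|].
  by [].
move: Hlt; rewrite ltrD2l ltr_pM2r // ltr_nat; lia.
Qed.

Lemma lin (f g : nat -> R) m n : (1 < m)%N -> (1 < n)%N ->
  (forall k l, (0 < k < m)%N -> (0 < l < n)%N -> f k.-1 + g l = f k + g l.-1) ->
  (forall k, (k < m)%N -> f k = f 0%N + k%:R * (g 1%N - g 0%N)) /\
  (forall l, (l < n)%N -> g l = g 0%N + l%:R * (g 1%N - g 0%N)).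
Proof.
move=> Hm Hn H; split.
  elim=> [|k IH] Hk; first by rewrite mul0r addr0.
  have := H k.+1 1%N ltac:(lia) ltac:(lia); rewrite /= IH; last lia.
  rewrite -natr1 => E; lra.
have Hf : f 1%N - f 0%N = g 1%N - g 0%N.
  have := H 1%N 1%N ltac:(lia) ltac:(lia); rewrite /= => E; lra.
elim=> [|l IH] Hl; first by rewrite mul0r addr0.
have := H 1%N l.+1 ltac:(lia) ltac:(lia); rewrite /= IH; last lia.
rewrite -natr1 => E; lra.
Qed.

End P6.



Section P7.
Variable R : realType.
Implicit Types (A B : {fset R * R}) (X Y S : {fset R}).

Lemma m_gt1_line A : ~ in_a_line A -> A != fset0 -> (1 < #|` xs A|)%N.
Proof.
move=> HL HA; rewrite ltnNge; apply/negP => H1.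
apply: HL; exists 1, 0, (fmax (xs A)); split; first by left; exact: oner_neq0.
move=> p Hp; rewrite mul1r mul0r addr0.
have Hx := fmax_mem (xs_neq0 HA).
have : #|` xs A| = 1%N by move: (xs_neq0 HA); rewrite -cardfs_gt0; lia.
move/eqP/cardfs1P => [x Ex].
have := xs_mem Hp; move: Hx; rewrite Ex !in_fset1 => /eqP -> /eqP //.
Qed.

Lemma xsAP A B : A != fset0 -> B != fset0 -> Def A B = 0 -> (1 < #|` xs A|)%N -> (1 < #|` xs B|)%N ->
  exists2 d, 0 < d & isAP (xs A) (fmin (xs A)) d #|` xs A| /\ isAP (xs B) (fmin (xs B)) d #|` xs B|.
Proof.
move=> HA HB H0 HX HY.
have HX0 := xs_neq0 HA; have HY0 := xs_neq0 HB.
have L := Lall HA HB H0.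
have bX := belowS_fmax_neq0 HX.
have bY := belowS_fmax_neq0 HY.
set b := fmax (xs B) - fmax (belowS (xs B) (fmax (xs B))).
have Hb : 0 < b by rewrite /b subr_gt0; apply: belowS_lt.
have gX : forall t, t \in xs A -> belowS (xs A) t != fset0 -> t - fmax (belowS (xs A) t) = b.
  move=> t Ht Hbt; have [E _] := L t (fmax (xs B)) Ht (fmax_mem HY0) Hbt bY.
  rewrite /b; lra.
exists b => //; split; apply: ap_of_gaps => //.
move=> s Hs Hbs; have [E _] := L (fmax (xs A)) s (fmax_mem HX0) Hs bX Hbs.
have := gX _ (fmax_mem HX0) bX; lra.
Qed.

Lemma single_fmin X u : #|` X| = 1%N -> u \in X -> u = fmin X.
Proof.
move=> H1 Hu; have := isAP1 0 H1; move=> /(_ u) [/(_ Hu) [j Hj ->] _].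
by rewrite mulr0 addr0.
Qed.

Lemma singles_line (C : {fset R * R}) z0 d q M0 D : 0 < d -> isAP (xs C) z0 d q ->
  (forall l, (l < q)%N -> fmin (colf C (z0 + l%:R * d)) = M0 + l%:R * D) ->
  (forall l, (l < q)%N -> #|` colf C (z0 + l%:R * d)| = 1%N) -> in_a_line C.
Proof.
move=> Hd HAP Hmin H1.
exists D, (- d), (D * z0 - d * M0); split; first by right; rewrite oppr_eq0 gt_eqF.
move=> p Hp; have := xs_mem Hp; move/HAP => [l Hl E1].
have Hc : p.2 \in colf C (z0 + l%:R * d) by apply/colfP; rewrite -E1 -surjective_pairing.
have := single_fmin (H1 _ Hl) Hc; rewrite Hmin // => E2.
rewrite E1 E2; ring.
Qed.

Section Struct.
Variables (A B : {fset R * R}) (d : R).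
Hypotheses (HA : A != fset0) (HB : B != fset0) (H0 : Def A B = 0)
  (Hm : (1 < #|` xs A|)%N) (Hn : (1 < #|` xs B|)%N) (Hd : 0 < d)
  (APA : isAP (xs A) (fmin (xs A)) d #|` xs A|) (APB : isAP (xs B) (fmin (xs B)) d #|` xs B|).

Local Notation m := #|` xs A|.
Local Notation n := #|` xs B|.
Definition cA k := colf A (fmin (xs A) + k%:R * d).
Definition cB l := colf B (fmin (xs B) + l%:R * d).

Lemma cA_neq0 k : (k < m)%N -> cA k != fset0.
Proof. by move=> Hk; apply: colf_neq0; exact: isAP_mem APA Hk. Qed.
Lemma cB_neq0 l : (l < n)%N -> cB l != fset0.
Proof. by move=> Hl; apply: colf_neq0; exact: isAP_mem APB Hl. Qed.

Lemma Rel2 k l : (0 < k < m)%N -> (0 < l < n)%N -> ssum (cA k.-1) (cB l) = ssum (cA k) (cB l.-1).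
Proof.
move=> Hk Hl.
have [bA EA] := isAP_pred APA Hd Hk.
have [bB EB] := isAP_pred APB Hd Hl.
have := Lall HA HB H0 (isAP_mem APA (_ : k < m)%N) (isAP_mem APB (_ : l < n)%N) bA bB.
rewrite /below EA EB => /(_ ltac:(lia) ltac:(lia)) [_ E]; exact: E.
Qed.

Lemma Rel3 k l : (k < m)%N -> (l < n)%N -> (#|` ssum (cA k) (cB l)| + 1 = #|` cA k| + #|` cB l|)%N.
Proof. by move=> Hk Hl; apply: R3all => //; [exact: isAP_mem APA Hk | exact: isAP_mem APB Hl]. Qed.

Hypotheses (HLA : ~ in_a_line A) (HLB : ~ in_a_line B).

Definition Dm := fmin (cB 1) - fmin (cB 0).
Definition Em := fmax (cB 1) - fmax (cB 0).

Lemma Lmin : (forall k, (k < m)%N -> fmin (cA k) = fmin (cA 0) + k%:R * Dm) /\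
             (forall l, (l < n)%N -> fmin (cB l) = fmin (cB 0) + l%:R * Dm).
Proof.
apply: (lin (f := fun k => fmin (cA k)) (g := fun l => fmin (cB l))) => // k l Hk Hl.
rewrite -!fmin_ssum ?Rel2 //; try (apply: cA_neq0; lia); apply: cB_neq0; lia.
Qed.

Lemma Lmax : (forall k, (k < m)%N -> fmax (cA k) = fmax (cA 0) + k%:R * Em) /\
             (forall l, (l < n)%N -> fmax (cB l) = fmax (cB 0) + l%:R * Em).
Proof.
apply: (lin (f := fun k => fmax (cA k)) (g := fun l => fmax (cB l))) => // k l Hk Hl.
rewrite -!fmax_ssum ?Rel2 //; try (apply: cA_neq0; lia); apply: cB_neq0; lia.
Qed.

Lemma card_cA k : (k < m)%N -> (0 < #|` cA k|)%N.
Proof. by move=> Hk; rewrite cardfs_gt0 cA_neq0. Qed.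
Lemma card_cB l : (l < n)%N -> (0 < #|` cB l|)%N.
Proof. by move=> Hl; rewrite cardfs_gt0 cB_neq0. Qed.

Lemma bigB : exists2 l0, (l0 < n)%N & (1 < #|` cB l0|)%N.
Proof.
case: (boolP (has (fun l => 1 < #|` cB l|)%N (iota 0 n))) => [/hasP [l Hl H]|Hno].
  by exists l => //; move: Hl; rewrite mem_iota.
exfalso; apply: HLB; apply: (singles_line Hd APB (proj2 Lmin)) => l Hl.
have := hasPn Hno l; rewrite mem_iota add0n Hl => /(_ isT).
have := card_cB Hl; rewrite /cB => h1; rewrite -leqNgt => h2; apply/eqP; rewrite eqn_leq h2 /=; exact: h1.
Qed.

Lemma bigA : exists2 k0, (k0 < m)%N & (1 < #|` cA k0|)%N.
Proof.
case: (boolP (has (fun k => 1 < #|` cA k|)%N (iota 0 m))) => [/hasP [k Hk H]|Hno].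
  by exists k => //; move: Hk; rewrite mem_iota.
exfalso; apply: HLA; apply: (singles_line Hd APA (proj1 Lmin)) => k Hk.
have := hasPn Hno k; rewrite mem_iota add0n Hk => /(_ isT).
have := card_cA Hk; rewrite /cA => h1; rewrite -leqNgt => h2; apply/eqP; rewrite eqn_leq h2 /=; exact: h1.
Qed.

Lemma betaex : exists2 b, 0 < b &
  (forall k, (k < m)%N -> isAP (cA k) (fmin (cA k)) b #|` cA k|) /\
  (forall l, (l < n)%N -> isAP (cB l) (fmin (cB l)) b #|` cB l|).
Proof.
have [k0 Hk0 Hc0] := bigA; have [l0 Hl0 Hd0] := bigB.
have [b Hb [Ha0 Hb0]] := ICD Hc0 Hd0 (Rel3 Hk0 Hl0).
exists b => //; split.
  move=> k Hk; case: (boolP (1 < #|` cA k|)%N) => Hc.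
    have [b' Hb' [Ha' Hb'0]] := ICD Hc Hd0 (Rel3 Hk Hl0).
    by rewrite (isAP_step Hb0 Hb'0 Hb Hb' Hd0).
  have E : #|` cA k| = 1%N by have := card_cA Hk; lia.
  by rewrite E; apply: isAP1.
move=> l Hl; case: (boolP (1 < #|` cB l|)%N) => Hc.
  have [b' Hb' [Ha' Hb'0]] := ICD Hc0 Hc (Rel3 Hk0 Hl).
  by rewrite (isAP_step Ha0 Ha' Hb Hb' Hc0).
have E : #|` cB l| = 1%N by have := card_cB Hl; lia.
by rewrite E; apply: isAP1.
Qed.

Lemma predR (q : nat) : (0 < q)%N -> (q.-1)%:R = q%:R - 1 :> R.
Proof. by move=> Hq; rewrite -{2}(prednK Hq) -natr1 addrK. Qed.

Lemma shapeAB : exists b D : R, exists r : int, 0 < b /\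
  (forall k, (k < m)%N -> (#|` cA k|)%:R = (#|` cA 0|)%:R + k%:R * r%:~R :> R) /\
  (forall l, (l < n)%N -> (#|` cB l|)%:R = (#|` cB 0|)%:R + l%:R * r%:~R :> R) /\
  (forall p, p \in A <-> exists k j, [/\ (k < m)%N, (j < #|` cA k|)%N &
        p = (fmin (xs A) + k%:R * d, fmin (cA 0) + k%:R * D + j%:R * b)]) /\
  (forall p, p \in B <-> exists l j, [/\ (l < n)%N, (j < #|` cB l|)%N &
        p = (fmin (xs B) + l%:R * d, fmin (cB 0) + l%:R * D + j%:R * b)]).
Proof.
have [b Hb [APa APb]] := betaex.
have [LA LB] := Lmin; have [UA UB] := Lmax.
have FA : forall k, (k < m)%N -> fmax (cA k) = fmin (cA k) + ((#|` cA k|)%:R - 1) * b.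
  by move=> k Hk; rewrite (isAP_fmax (APa k Hk) Hb (card_cA Hk)) predR // card_cA.
have FB : forall l, (l < n)%N -> fmax (cB l) = fmin (cB l) + ((#|` cB l|)%:R - 1) * b.
  by move=> l Hl; rewrite (isAP_fmax (APb l Hl) Hb (card_cB Hl)) predR // card_cB.
set r : int := (#|` cA 1|)%:Z - (#|` cA 0|)%:Z.
have Hr : r%:~R = (#|` cA 1|)%:R - (#|` cA 0|)%:R :> R by rewrite /r intrB.
have HED : Em - Dm = r%:~R * b.
  have h1 := FA 1%N Hm; have h0 := FA 0%N (ltnW Hm).
  rewrite (UA 1%N Hm) (LA 1%N Hm) in h1.
  rewrite Hr. move: h1 h0; rewrite !mul1r => h1 h0. lra.
have Hbn : b != 0 by rewrite gt_eqF.
exists b, Dm, r; split => //; split; [|split; [|split]].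
- move=> k Hk; apply: (mulIf Hbn).
  have h1 := FA k Hk; have h0 := FA 0%N (ltnW Hm).
  rewrite (UA k Hk) (LA k Hk) in h1.
  have : (#|` cA k|)%:R * b = (#|` cA 0|)%:R * b + k%:R * (Em - Dm) by lra.
  by rewrite HED => ->; ring.
- move=> l Hl; apply: (mulIf Hbn).
  have h1 := FB l Hl; have h0 := FB 0%N (ltnW Hn).
  rewrite (UB l Hl) (LB l Hl) in h1.
  have : (#|` cB l|)%:R * b = (#|` cB 0|)%:R * b + l%:R * (Em - Dm) by lra.
  by rewrite HED => ->; ring.
- move=> p; split => [Hp|[k [j [Hk Hj ->]]]].
    have := xs_mem Hp; move/APA => [k Hk E1].
    have Hc : p.2 \in cA k by rewrite /cA; apply/colfP; rewrite -E1 -surjective_pairing.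
    move/(APa k Hk): Hc => [j Hj E2].
    exists k, j; split => //; by rewrite [p]surjective_pairing E1 E2 (LA k Hk).
  apply: (elimT (colfP _ _ _)); rewrite -/(cA k) -(LA k Hk); apply/(APa k Hk); by exists j.
- move=> p; split => [Hp|[k [j [Hk Hj ->]]]].
    have := xs_mem Hp; move/APB => [k Hk E1].
    have Hc : p.2 \in cB k by rewrite /cB; apply/colfP; rewrite -E1 -surjective_pairing.
    move/(APb k Hk): Hc => [j Hj E2].
    exists k, j; split => //; by rewrite [p]surjective_pairing E1 E2 (LB k Hk).
  apply: (elimT (colfP _ _ _)); rewrite -/(cB k) -(LB k Hk); apply/(APb k Hk); by exists j.
Qed.

End Struct.

End P7.



Section P8.
Variable R : realType.

Lemma int_nat (z : int) : 0 <= z%:~R :> R -> exists k : nat, z = k.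
Proof.
rewrite ler0z; case: z => [k _|k]; first by exists k.
by rewrite /Order.le /=.
Qed.

Lemma trap_of_shape (A : {fset R * R}) (m h : nat) (r : int) (d b D x0 L0 : R) (a : nat -> nat) :
  0 < d -> 0 < b -> (0 < m)%N -> (0 < h)%N ->
  (forall k, (k < m)%N -> (0 < a k)%N) ->
  (forall k, (k < m)%N -> (a k)%:R = h%:R + k%:R * r%:~R :> R) ->
  (forall p, p \in A <-> exists k j, [/\ (k < m)%N, (j < a k)%N & p = (x0 + k%:R * d, L0 + k%:R * D + j%:R * b)]) ->
  std_trapezoid (scaled_image d b A) m h (D / b + r%:~R) (D / b).
Proof.
move=> Hd Hb Hm Hh Ha Hsz Hsh.
have Hd0 : d != 0 by rewrite gt_eqF.
have Hb0 : b != 0 by rewrite gt_eqF.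
split => //; split => //; split; first by exists r; ring.
split.
  have Hl : (m.-1 < m)%N by lia.
  have := Ha _ Hl; have := Hsz _ Hl; rewrite predR // => E H1.
  have : 1 <= (a m.-1)%:R :> R by rewrite ler1n.
  rewrite E => h1; nra.
exists (x0 / d, L0 / b) => p; split.
  move=> [q /Hsh [k [j [Hk Hj ->]]] ->] /=.
  split.
    exists j%:Z, k%:Z; rewrite /=; congr (_, _); field; by rewrite ?Hd0 ?Hb0.
  have E1 : d^-1 * (x0 + k%:R * d) - x0 / d = k%:R by field.
  have E2 : b^-1 * (L0 + k%:R * D + j%:R * b) - L0 / b = k%:R * (D / b) + j%:R by field.
  rewrite E1 E2.
  have hk : k.+1%:R <= m%:R :> R by rewrite ler_nat.
  have hj : j.+1%:R <= (a k)%:R :> R by rewrite ler_nat.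
  rewrite -!natr1 Hsz // in hk hj.
  have : 0 <= j%:R :> R by [].
  have : 0 <= k%:R :> R by [].
  move=> hk0 hj0 /=; split; [lra|split; [lra|split; lra]].
move=> [[z [w E]] [H1 [H2 [H3 H4]]]].
case: E => E1 E2.
rewrite E1 /= in H1 H2 H3 H4; rewrite E2 /= in H3 H4.
have [k Ek] := int_nat H1.
have Hz : 0 <= z%:~R :> R by lra.
have [j Ej] := int_nat Hz.
subst w z.
have e : forall n : nat, (n%:Z)%:~R = n%:R :> R by [].
rewrite !e in E1 E2 H1 H2 H3 H4.
have Hk : (k < m)%N.
  rewrite -(ltr_nat R); lra.
have Hj : (j < a k)%N.
  rewrite -(ltr_nat R) Hsz //; lra.
exists (x0 + k%:R * d, L0 + k%:R * D + j%:R * b); first by apply/Hsh; exists k, j.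
rewrite [p]surjective_pairing /=; congr (_, _).
  have -> : p.1 = x0 / d + k%:R by move: E1 => /= <-; ring.
  by field.
have -> : p.2 = L0 / b + (j%:R + k%:R * (D / b)) by move: E2 => /= <-; ring.
by field.
Qed.

End P8.

Local Close Scope fset_scope.
Local Open Scope ring_scope.

Theorem theorem2p2 (R : realType) (A B : {fset R * R}) :
  ~ in_a_line A -> ~ in_a_line B ->
  (0, 0) \in A -> (0, 0) \in B ->
  let m := nvert A in let n := nvert B in
  (#|` sumset A B |)%:R =
    ((#|` A|)%:R / m%:R + (#|` B|)%:R / n%:R - 1) * ((m + n)%:R - 1) :> R ->
  exists (alpha beta : R), 0 < alpha /\ 0 < beta /\
    exists (c d : R) (h h' : nat),
      std_trapezoid (scaled_image alpha beta A) m h c d /\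
      std_trapezoid (scaled_image alpha beta B) n h' c d.
Proof.
move=> HLA HLB H0A H0B m n Heq.
have HA : A != fset0 := fset_neq0 H0A.
have HB : B != fset0 := fset_neq0 H0B.
have Hm := m_gt1_line HLA HA.
have Hn := m_gt1_line HLB HB.
have HD : Def A B = 0.
  have E : (#|` sumset A B|)%:R = ((#|` A|)%:R / mA A + (#|` B|)%:R / mA B - 1)
        * (mA A + mA B - 1) :> R by rewrite /mA -natrD; exact: Heq.
  by rewrite /Def /Tv E; ring.
have [d Hd [APA APB]] := xsAP HA HB HD Hm Hn.
have [b [D [r [Hb [SA [SB [ShA ShB]]]]]]] := shapeAB HA HB HD Hm Hn Hd APA APB HLA HLB.
exists d, b; split => //; split => //.
exists (D / b + r%:~R), (D / b), #|` cA A d 0|, #|` cB B d 0|; split.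
  apply: (trap_of_shape (a := fun k => #|` cA A d k|)) => //.
  - exact: ltnW.
  - exact: (card_cA APA (ltnW Hm)).
  - by move=> k Hk; apply: card_cA.
apply: (trap_of_shape (a := fun k => #|` cB B d k|)) => //.
- exact: ltnW.
- exact: (card_cB APB (ltnW Hn)).
- by move=> k Hk; apply: card_cB.
Qed.
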